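(* Let $C$ be an ordered field, $I$ a nonempty index set, $G$ an $I$-ordered $C$-vector space and $((P_i,Q_i))_{i\in I}$ a polycut in $G$. Then there are an $I$-ordered $C$-vector space $G'$ extending $G$ and an element $b\in G'$ such that (1) for any $I$-ordered $C$-vector space extension $G^*$ of $G$ and any $b^*\in G^*$ realizing the polycut $((P_i,Q_i))_{i\in I}$, there is an embedding $G'\to G^*$ over $G$ of $I$-ordered $C$-vector spaces sending $b$ to $b^*$. Furthermore, for any $I$-ordered $C$-vector space $G'$ extending $G$ and any $b\in G'$ satisfying (1), we have (2) $b$ realizes the polycut $((P_i,Q_i))_{i\in I}$, and (3) $G'=G\oplus Cb$ (internal direct sum of $C$-vector spaces).
   Context: An $I$-ordered $C$-vector space is a $C$-vector space $G$ with a family $(<_i)_{i\in I}$ of total orderings such that each $(G,<_i)$ is an ordered $C$-vector space. $G'$ extends $G$ if $G$ is a $C$-subspace of $G'$ and each $<_i$ on $G$ is the restriction of $<_i$ on $G'$. An embedding of $I$-ordered $C$-vector spaces is a $C$-linear injective map $j$ with $x>_i0\Rightarrow j(x)>_i0$ for all $i$. A polycut in $G$ is a family $((P_i,Q_i))_{i\in I}$ where each $P_i$ is a downward closed subset of $(G,<_i)$ and $Q_i=G\setminus P_i$; an element $b$ of an extension realizes it if $P_i<_i b<_i Q_i$ for every $i\in I$. *)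

(* Defs.v *)
From HB Require Import structures.
From mathcomp Require Import all_boot all_order all_algebra.
Set Implicit Arguments. Unset Strict Implicit. Unset Printing Implicit Defensive.
Import Order.TTheory GRing.Theory Num.Theory.
Local Open Scope ring_scope.

Definition ordered_lmod (C : realFieldType) (G : lmodType C)
  (lt : G -> G -> Prop) : Prop :=
  [/\ (forall x, ~ lt x x),
      (forall x y z, lt x y -> lt y z -> lt x z),
      (forall x y, [\/ lt x y, x = y | lt y x]),
      (forall x y z, lt x y -> lt (x + z) (y + z)) &
      (forall (c : C) x y, 0 < c -> lt x y -> lt (c *: x) (c *: y))].

Definition Iordered (C : realFieldType) (I : Type) (G : lmodType C)
  (lt : I -> G -> G -> Prop) : Prop := forall i, ordered_lmod (lt i).

Definition extends (C : realFieldType) (I : Type) (G G' : lmodType C)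
  (lt : I -> G -> G -> Prop) (lt' : I -> G' -> G' -> Prop)
  (f : {linear G -> G'}) : Prop :=
  injective f /\ forall i x y, lt i x y <-> lt' i (f x) (f y).

Definition embedding (C : realFieldType) (I : Type) (A B : lmodType C)
  (ltA : I -> A -> A -> Prop) (ltB : I -> B -> B -> Prop)
  (j : {linear A -> B}) : Prop :=
  injective j /\ forall i x, ltA i 0 x -> ltB i 0 (j x).

(* Polycut: P i is downward closed in (G, <_i); Q i is its complement. *)
Definition polycut (C : realFieldType) (I : Type) (G : lmodType C)
  (lt : I -> G -> G -> Prop) (P : I -> G -> Prop) : Prop :=
  forall i x y, P i y -> lt i x y -> P i x.

Definition realizes (C : realFieldType) (I : Type) (G G' : lmodType C)
  (lt' : I -> G' -> G' -> Prop) (f : {linear G -> G'})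
  (P : I -> G -> Prop) (b : G') : Prop :=
  forall i, (forall x, P i x -> lt' i (f x) b) /\
            (forall x, ~ P i x -> lt' i b (f x)).

Definition universal_realizer (C : realFieldType) (I : Type) (G : lmodType C)
  (lt : I -> G -> G -> Prop) (P : I -> G -> Prop)
  (G' : lmodType C) (lt' : I -> G' -> G' -> Prop) (f : {linear G -> G'})
  (b : G') : Prop :=
  forall (Gs : lmodType C) (lts : I -> Gs -> Gs -> Prop)
         (fs : {linear G -> Gs}) (bs : Gs),
    Iordered lts -> extends lt lts fs -> realizes lts fs P bs ->
    exists j : {linear G' -> Gs},
      [/\ embedding lt' lts j, (forall x, j (f x) = fs x) & j b = bs].

Definition direct_sum_line (C : realFieldType) (G G' : lmodType C)
  (f : {linear G -> G'}) (b : G') : Prop :=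
  (forall y : G', exists (x : G) (c : C), y = f x + c *: b) /\
  (forall (x : G) (c : C), f x = c *: b -> f x = 0).

(* Main.v *)
Require Import Defs.
From HB Require Import structures.
From mathcomp Require Import all_boot all_order all_algebra.
From Stdlib Require Import Classical.
Set Implicit Arguments. Unset Strict Implicit. Unset Printing Implicit Defensive.
Import Order.TTheory GRing.Theory Num.Theory.
Local Open Scope ring_scope.

Section OL.
Variables (C : realFieldType) (G : lmodType C) (lt : G -> G -> Prop).
Hypothesis H : ordered_lmod lt.
Definition nn (x : G) := lt 0 x \/ x = 0.

Lemma ol_irr x : ~ lt x x. Proof. by case: H. Qed.
Lemma ol_trans x y z : lt x y -> lt y z -> lt x z. Proof. by case: H => _ t _ _ _; apply: t. Qed.
Lemma ol_tot x y : [\/ lt x y, x = y | lt y x]. Proof. by case: H. Qed.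
Lemma ol_add x y z : lt x y -> lt (x + z) (y + z). Proof. by case: H => _ _ _ t _; apply: t. Qed.
Lemma ol_scale c x y : 0 < c -> lt x y -> lt (c *: x) (c *: y). Proof. by case: H => _ _ _ _ t; apply: t. Qed.
Lemma ol_asym x y : lt x y -> ~ lt y x.
Proof. by move=> a b; apply: (ol_irr (ol_trans a b)). Qed.
Lemma ol_sub x y : lt x y <-> lt 0 (y - x).
Proof.
split=> h; first by rewrite -(subrr x); apply: ol_add.
by have := ol_add x h; rewrite add0r subrK.
Qed.
Lemma ol_addpos a b : lt 0 a -> nn b -> lt 0 (a + b).
Proof.
move=> ha [hb|->]; last by rewrite addr0.
apply: ol_trans ha _; rewrite ol_sub addrAC subrr add0r.
by rewrite ol_sub subr0 in hb.
Qed.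
Lemma nn_add a b : nn a -> nn b -> nn (a + b).
Proof. by move=> [ha|->] hb; [left; apply: ol_addpos| rewrite add0r]. Qed.
Lemma pos_scale c a : 0 < c -> lt 0 a -> lt 0 (c *: a).
Proof. by move=> hc ha; have := ol_scale hc ha; rewrite scaler0. Qed.
Lemma nn_scale c a : 0 < c -> nn a -> nn (c *: a).
Proof. by move=> hc [ha|->]; [left; apply: pos_scale | right; rewrite scaler0]. Qed.
Lemma nn_lt x y : lt x y -> nn (y - x).
Proof. by move=> /ol_sub; left. Qed.
Lemma ol_neg x y : lt x y -> lt (- y) (- x).
Proof. by move=> /ol_sub h; apply/ol_sub; rewrite opprK addrC. Qed.

Variable P : G -> Prop.
Hypothesis HP : forall x y, P y -> lt x y -> P x.
Lemma PQ p q : P p -> ~ P q -> lt p q.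
Proof.
move=> hp hq; case: (ol_tot p q) => // [e|h]; first by rewrite e in hp.
by case: hq; apply: HP hp h.
Qed.
Lemma Pmax p1 p2 : P p1 -> P p2 -> exists p, [/\ P p, nn (p - p1) & nn (p - p2)].
Proof.
move=> h1 h2; case: (ol_tot p1 p2) => [h|<-|h].
- by exists p2; split => //; [apply: nn_lt | right; rewrite subrr].
- by exists p1; split => //; right; rewrite subrr.
- by exists p1; split => //; [right; rewrite subrr | apply: nn_lt].
Qed.
Lemma Qmin q1 q2 : ~ P q1 -> ~ P q2 -> exists q, [/\ ~ P q, nn (q1 - q) & nn (q2 - q)].
Proof.
move=> h1 h2; case: (ol_tot q1 q2) => [h|<-|h].
- by exists q1; split => //; [right; rewrite subrr | apply: nn_lt].
- by exists q1; split => //; right; rewrite subrr.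
- by exists q2; split => //; [apply: nn_lt | right; rewrite subrr].
Qed.

Definition pos (u : (G * C^o)%type) : Prop :=
  [\/ u.2 = 0 /\ lt 0 u.1,
      0 < u.2 /\ exists p, P p /\ nn (u.1 + u.2 *: p) |
      u.2 < 0 /\ exists q, ~ P q /\ nn (u.1 + u.2 *: q)].

Lemma pos0 : ~ pos 0.
Proof. by case=> [][] /=; [move=> _ /ol_irr | rewrite ltxx | rewrite ltxx]. Qed.

Lemma pos_scaleC (c : C) u : 0 < c -> pos u -> pos (c *: u).
Proof.
case: u => x d hc /= [[/= -> h]|[/= hd [p [hp hn]]]|[/= hd [p [hp hn]]]].
- by constructor 1; split => /=; [rewrite ?mulr0 ?scaler0 | apply: pos_scale].
- constructor 2; split => /=; first by rewrite mulr_gt0.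
  by exists p; split => //; rewrite -scalerA -scalerDr; apply: nn_scale.
- constructor 3; split => /=; first by rewrite pmulr_rlt0.
  by exists p; split => //; rewrite -scalerA -scalerDr; apply: nn_scale.
Qed.

Lemma pos_tot u : [\/ pos u, u = 0 | pos (- u)].
Proof.
case: u => x d.
have key : d != 0 -> d *: (- (d^-1 *: x)) = - x.
  by move=> hd; rewrite scalerN scalerA mulfV // scale1r.
case: (ltgtP d 0) => [hd|hd|->].
- case: (classic (P (- (d^-1 *: x)))) => hP.
  + constructor 3; constructor 2; split => /=; first by rewrite oppr_gt0.
    exists (- (d^-1 *: x)); split => //; right.
    by rewrite scaleNr key ?ltr0_neq0 // subrr.
  + constructor 1; constructor 3; split => //=.
    by exists (- (d^-1 *: x)); split => //; right; rewrite key ?ltr0_neq0 // subrr.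
- case: (classic (P (- (d^-1 *: x)))) => hP.
  + constructor 1; constructor 2; split => //=.
    by exists (- (d^-1 *: x)); split => //; right; rewrite key ?gt_eqF // subrr.
  + constructor 3; constructor 3; split => /=; first by rewrite oppr_lt0.
    exists (- (d^-1 *: x)); split => //; right.
    by rewrite scaleNr key ?gt_eqF // subrr.
- case: (ol_tot 0 x) => [h|<-|h].
  + by constructor 1; constructor 1.
  + by constructor 2.
  + constructor 3; constructor 1; split => /=; first by rewrite oppr0.
    by have := ol_neg h; rewrite oppr0.
Qed.

Lemma L1 (a b c : G) : (a + b) + (c - b) = a + c.
Proof. by rewrite -addrA [b + _]addrC subrK. Qed.

Lemma shift_nn (d : C) x a b : nn (x + d *: a) -> 0 < d -> nn (b - a) -> nn (x + d *: b).
Proof. by move=> h hd hab; have := nn_add h (nn_scale hd hab); rewrite scalerBr L1. Qed.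
Lemma shift_nn' (d : C) x a b : nn (x + d *: a) -> d < 0 -> nn (a - b) -> nn (x + d *: b).
Proof.
move=> h hd hab; have hd' : 0 < - d by rewrite oppr_gt0.
by have := nn_add h (nn_scale hd' hab); rewrite scalerBr !scaleNr opprK addrA addrK.
Qed.
Lemma shift_pos (d : C) x a b : nn (x + d *: a) -> 0 < d -> lt 0 (b - a) -> lt 0 (x + d *: b).
Proof.
by move=> h hd hab; have := ol_addpos (pos_scale hd hab) h; rewrite addrC scalerBr L1.
Qed.

Lemma pos_add_zero x1 x2 (d2 : C) : lt 0 x1 -> pos (x2, d2) -> pos (x1 + x2, 0 + d2).
Proof.
move=> h1 [[/= -> h]|[/= hd [p [hp h]]]|[/= hd [p [hp h]]]].
- by constructor 1; split => /=; [rewrite addr0 | apply: ol_addpos => //; left].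
- constructor 2; split => /=; first by rewrite add0r.
  by exists p; split => //; rewrite add0r -addrA; apply: nn_add => //; left.
- constructor 3; split => /=; first by rewrite add0r.
  by exists p; split => //; rewrite add0r -addrA; apply: nn_add => //; left.
Qed.

Lemma pos_add_mixed x1 x2 (d1 d2 : C) p q : 0 < d1 -> P p -> nn (x1 + d1 *: p) ->
  d2 < 0 -> ~ P q -> nn (x2 + d2 *: q) -> pos (x1 + x2, d1 + d2).
Proof.
move=> hd1 hp h1 hd2 hq h2.
have hpq : lt 0 (q - p) by apply (proj1 (ol_sub p q)); apply: PQ.
have hA := shift_pos h1 hd1 hpq.
have hB := shift_nn' h2 hd2 (or_introl hpq).
case: (ltgtP (d1 + d2) 0) => [hs|hs|hs].
- constructor 3; split => //=; exists q; split => //.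
  by rewrite scalerDl addrACA; apply: nn_add => //; left.
- constructor 2; split => //=; exists p; split => //.
  by rewrite scalerDl addrACA; apply: nn_add.
- constructor 1; split => //=.
  have -> : x1 + x2 = (x1 + d1 *: q) + (x2 + d2 *: q).
    by rewrite addrACA -scalerDl hs scale0r addr0.
  exact: ol_addpos.
Qed.

Lemma pos_add u v : pos u -> pos v -> pos (u + v).
Proof.
case: u => x1 d1; case: v => x2 d2.
change (pos (x1,d1) -> pos (x2,d2) -> pos (x1 + x2, d1 + d2)).
move=> [[/= e1 h1]|[/= hd1 [p1 [hp1 h1]]]|[/= hd1 [p1 [hp1 h1]]]].
- by rewrite e1; apply: pos_add_zero.
- move=> [[/= e2 h2]|[/= hd2 [p2 [hp2 h2]]]|[/= hd2 [p2 [hp2 h2]]]].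
  + by rewrite e2 (addrC x1) addr0 -(add0r d1); apply: pos_add_zero => //; constructor 2; split => //; exists p1.
  + have [p [hp n1 n2]] := Pmax hp1 hp2.
    constructor 2; split => /=; first by rewrite addr_gt0.
    exists p; split => //; rewrite scalerDl addrACA; apply: nn_add.
    * exact: shift_nn h1 hd1 n1.
    * exact: shift_nn h2 hd2 n2.
  + exact: pos_add_mixed hd1 hp1 h1 hd2 hp2 h2.
- move=> [[/= e2 h2]|[/= hd2 [p2 [hp2 h2]]]|[/= hd2 [p2 [hp2 h2]]]].
  + by rewrite e2 (addrC x1) addr0 -(add0r d1); apply: pos_add_zero => //; constructor 3; split => //; exists p1.
  + by rewrite (addrC x1) (addrC d1); apply: pos_add_mixed hd2 hp2 h2 hd1 hp1 h1.
  + have [q [hq n1 n2]] := Qmin hp1 hp2.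
    constructor 3; split => /=; first by rewrite ltr_nwDr // ltW.
    exists q; split => //; rewrite scalerDl addrACA; apply: nn_add.
    * exact: shift_nn' h1 hd1 n1.
    * exact: shift_nn' h2 hd2 n2.
Qed.
End OL.

Section Model.
Variables (C : realFieldType) (I : Type) (G : lmodType C).
Variables (lt : I -> G -> G -> Prop) (P : I -> G -> Prop).
Hypotheses (Hlt : Iordered lt) (HP : polycut lt P).

Definition M := (G * C^o)%type.
Definition ltM i (u v : M) : Prop := pos (lt i) (P i) (v - u).

Lemma ltM_ord : Iordered ltM.
Proof.
move=> i; have H := Hlt i; have HPi : forall x y, P i y -> lt i x y -> P i x by move=> x y; apply: HP.
split.
- by move=> x; rewrite /ltM subrr; apply: pos0.
- move=> x y z h1 h2; have := pos_add H HPi h2 h1.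
  by rewrite /ltM addrA subrK.
- move=> x y; case: (pos_tot H (P i) (y - x)) => [h|h|h].
  + by constructor 1.
  + by constructor 2; apply/esym/subr0_eq.
  + by constructor 3; rewrite /ltM -opprB.
- move=> x y z; rewrite /ltM.
  by have -> : y + z - (x + z) = y - x by rewrite opprD addrACA subrr addr0.
- by move=> c x y hc; rewrite /ltM -scalerBr; apply: pos_scaleC.
Qed.

Definition f0 (x : G) : M := (x, 0).
Lemma f0_lin : linear f0.
Proof. by move=> a x y; apply: injective_projections; rewrite /= ?mulr0 ?addr0 ?scaler0. Qed.
HB.instance Definition _ := GRing.isLinear.Build C G M *:%R f0 f0_lin.

Definition b0 : M := (0, 1).

Lemma pos_x0 i z : pos (lt i) (P i) (z, 0) <-> lt i 0 z.
Proof.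
split; last by move=> h; constructor 1.
by case=> [][] //= h; rewrite ltxx in h.
Qed.

Lemma ext0 : extends lt ltM f0.
Proof.
split; first by move=> x y [].
move=> i x y; rewrite /ltM -linearB pos_x0.
by have [] := ol_sub (Hlt i) x y.
Qed.

Lemma real0 : realizes ltM f0 P b0.
Proof.
move=> i; split => x hx; rewrite /ltM.
- have -> : b0 - f0 x = (- x, 1) by apply: injective_projections; rewrite /= ?sub0r ?subr0.
  constructor 2; split => //=; exists x; split => //; right.
  by rewrite scale1r addNr.
- have -> : f0 x - b0 = (x, -1) by apply: injective_projections; rewrite /= ?sub0r ?subr0.
  constructor 3; split => /=; first by rewrite oppr_lt0.
  by exists x; split => //; right; rewrite scaleN1r subrr.
Qed.

End Model.

Section Emb.
Variables (C : realFieldType) (I : Type) (G : lmodType C).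
Variables (Gs : lmodType C) (fs : {linear G -> Gs}) (bs : Gs).
Definition jm (u : M G) : Gs := fs u.1 + u.2 *: bs.
Lemma jm_lin : linear jm.
Proof.
move=> a [x1 d1] [x2 d2]; rewrite /jm /=.
by rewrite linearD linearZ scalerDl -scalerA scalerDr addrACA.
Qed.
HB.instance Definition _ := GRing.isLinear.Build C (M G) Gs *:%R jm jm_lin.
End Emb.

Lemma emb_inj (C : realFieldType) (A B : lmodType C) (ltA : A -> A -> Prop)
  (ltB : B -> B -> Prop) (j : {linear A -> B}) :
  ordered_lmod ltA -> ordered_lmod ltB -> (forall x, ltA 0 x -> ltB 0 (j x)) ->
  injective j.
Proof.
move=> HA HB hj u v e.
have e0 : j (u - v) = 0 by rewrite linearB e subrr.
case: (ol_tot HA 0 (u - v)) => [h|h|h].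
- by have := hj _ h; rewrite e0 => /(ol_irr HB).
- by apply/subr0_eq; rewrite -h.
- have h' : ltA 0 (- (u - v)) by have := (proj1 (ol_sub HA (u - v) 0)) h; rewrite sub0r.
  by have := hj _ h'; rewrite linearN e0 oppr0 => /(ol_irr HB).
Qed.

Lemma emb_mono (C : realFieldType) (A B : lmodType C) (ltA : A -> A -> Prop)
  (ltB : B -> B -> Prop) (j : {linear A -> B}) :
  ordered_lmod ltA -> ordered_lmod ltB -> (forall x, ltA 0 x -> ltB 0 (j x)) ->
  forall u v, ltA u v -> ltB (j u) (j v).
Proof.
move=> HA HB hj u v h; have := hj _ ((proj1 (ol_sub HA u v)) h).
by rewrite linearB => /(proj2 (ol_sub HB _ _)).
Qed.

Lemma emb_refl (C : realFieldType) (A B : lmodType C) (ltA : A -> A -> Prop)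
  (ltB : B -> B -> Prop) (j : {linear A -> B}) :
  ordered_lmod ltA -> ordered_lmod ltB -> (forall x, ltA 0 x -> ltB 0 (j x)) ->
  forall u v, ltB (j u) (j v) -> ltA u v.
Proof.
move=> HA HB hj u v h.
case: (ol_tot HA u v) => [//|e|h'].
- by rewrite e in h; case: (ol_irr HB h).
- by case: (ol_asym HB h (emb_mono HA HB hj h')).
Qed.

Lemma jm_pos (C : realFieldType) (I : Type) (G : lmodType C)
  (lt : I -> G -> G -> Prop) (P : I -> G -> Prop)
  (Gs : lmodType C) (lts : I -> Gs -> Gs -> Prop) (fs : {linear G -> Gs}) (bs : Gs) :
  Iordered lts -> extends lt lts fs -> realizes lts fs P bs ->
  forall i u, pos (lt i) (P i) u -> lts i 0 (jm fs bs u).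
Proof.
move=> Hs Hext hr i u.
have HS := Hs i.
have Hf : forall w, lt i 0 w -> lts i 0 (fs w).
  by move=> w /(proj1 (Hext.2 i 0 w)); rewrite linear0.
have Hfn : forall w, nn (lt i) w -> nn (lts i) (fs w).
  by move=> w [h|->]; [left; apply: Hf | right; rewrite linear0].
have key : forall x d p, nn (lt i) (x + d *: p) -> lts i (d *: fs p) (d *: bs) ->
    lts i 0 (fs x + d *: bs).
  move=> x d p hn hl; have hl' := ol_add HS (fs x) hl.
  rewrite !(addrC _ (fs x)) in hl'.
  have E : fs (x + d *: p) = fs x + d *: fs p by rewrite linearD linearZ.
  have := Hfn _ hn; rewrite E => -[h|h].
  - apply: (ol_trans HS h). exact: hl'.
  - by rewrite h in hl'.
case: u => x d [[/= -> h]|[/= hd [p [hp hn]]]|[/= hd [p [hp hn]]]]; rewrite /jm /=.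
- by rewrite scale0r addr0; apply: Hf.
- apply: (key x d p hn). exact: (ol_scale HS hd ((hr i).1 p hp)).
- apply: (key x d p hn).
  have hd' : 0 < - d by rewrite oppr_gt0.
  have := ol_neg HS (ol_scale HS hd' ((hr i).2 p hp)).
  by rewrite !scaleNr !opprK.
Qed.

Theorem lemma3p2 (C : realFieldType) (I : Type) (i0 : I)
  (G : lmodType C) (lt : I -> G -> G -> Prop) (P : I -> G -> Prop) :
  Iordered lt -> polycut lt P ->
  (exists (G' : lmodType C) (lt' : I -> G' -> G' -> Prop)
          (f : {linear G -> G'}) (b : G'),
     [/\ Iordered lt', extends lt lt' f & universal_realizer lt P lt' f b])
  /\
  (forall (G' : lmodType C) (lt' : I -> G' -> G' -> Prop)
          (f : {linear G -> G'}) (b : G'),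
     Iordered lt' -> extends lt lt' f -> universal_realizer lt P lt' f b ->
     realizes lt' f P b /\ direct_sum_line f b).
Proof.
move=> Hlt HP; split.
- exists (M G), (ltM lt P), (@f0 C G), (@b0 C G); split.
  + exact: ltM_ord.
  + exact: ext0.
  + move=> Gs lts fs bs Hs Hext hr.
    exists (jm fs bs); split.
    * have hpos : forall i x, ltM lt P i 0 x -> lts i 0 (jm fs bs x).
        by move=> i x; rewrite /ltM subr0; apply: jm_pos.
      split => //; exact: (emb_inj (ltM_ord Hlt HP i0) (Hs i0) (hpos i0)).
    * by move=> x; change (fs x + 0 *: bs = fs x); rewrite scale0r addr0.
    * by change (fs 0 + 1 *: bs = bs); rewrite linear0 add0r scale1r.
- move=> G' lt' f b Hord' Hext' Hu.
  have [j [[jinj jpos] jf jb]] := Hu _ _ _ _ (ltM_ord Hlt HP) (@ext0 _ _ _ lt P Hlt) (real0 lt P).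
  split.
  + move=> i; have [h1 h2] := real0 lt P i.
    split => x hx; apply: (emb_refl (Hord' i) (ltM_ord Hlt HP i) (jpos i));
      rewrite jf jb; [exact: h1 | exact: h2].
  + split.
    * move=> y; exists (j y).1, (j y).2; apply: jinj.
      rewrite linearD linearZ jf jb; apply: injective_projections.
      - by rewrite /= ?scaler0 ?addr0.
      - by rewrite /= ?add0r; exact: esym (mulr1 _).
    * move=> x c e; have := congr1 (fun u => u.1) (congr1 j e).
      by rewrite jf linearZ jb /= scaler0 => ->; rewrite linear0.
Qed.
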